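(* Let $S_1,S_2\subseteq\mathbb{F}_q$ with $\#S_1=\#S_2=s$, let $\sigma\in\{0,\dots,s-1\}$, and let $\ell$ be a positive integer with $\ell\le\sigma+1$ such that $\ell$ is even if and only if $\sigma$ is odd. Then: (1) There exist $L_2\subsetneq L_1\subseteq\Delta(s,s)$ (namely those of the form $L_1=\{N\mid N\preceq_{\deg}X^iY^j\}$, $L_2=\{N\mid N\prec_{\deg}X^jY^i\}$ with $i=\frac{\sigma-\ell+1}{2}$, $j=\frac{\sigma+\ell-1}{2}$) with $\#L_1-\#L_2=\ell$ and $$M_1(C(L_1),C(L_2))=\Big(s-\tfrac{\sigma-\ell+1}{2}\Big)\Big(s-\tfrac{\sigma+\ell-1}{2}\Big),\quad M_1(C(L_2)^\perp,C(L_1)^\perp)\ge\Big(\tfrac{\sigma-\ell+3}{2}\Big)\Big(\tfrac{\sigma+\ell+1}{2}\Big),$$ and if $\ell\le\sigma-1$ then $d(C(L_1))=s(s-\sigma)<M_1(C(L_1),C(L_2))$. (2) There exist $L_2\subsetneq L_1\subseteq\Delta(s,s)$ with $\#L_1-\#L_2=\ell$ and $$M_1(C(L_1),C(L_2))=\Big(\tfrac{\sigma-\ell+3}{2}\Big)\Big(\tfrac{\sigma+\ell+1}{2}\Big),\quad M_1(C(L_2)^\perp,C(L_1)^\perp)\ge\Big(s-\tfrac{\sigma-\ell+1}{2}\Big)\Big(s-\tfrac{\sigma+\ell-1}{2}\Big),$$ and if $\ell\le\sigma-1$ then $d(C(L_1))=\sigma+1<M_1(C(L_1),C(L_2))$.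
   Context: $q$ is a prime power. $S_1\times S_2=\{\alpha_1,\dots,\alpha_n\}$, $n=s^2$. $\Delta(s,s)=\{X^aY^b\mid 0\le a,b<s\}$. For $L\subseteq\Delta(s,s)$, $C(L)\subseteq\mathbb{F}_q^n$ is the span of $(N(\alpha_1),\dots,N(\alpha_n))$, $N\in L$; $C^\perp$ is the Euclidean dual; $d(C)$ is the minimum Hamming distance. $\prec_{\deg}$: $X^aY^b\prec_{\deg}X^cY^d$ iff $a+b<c+d$, or $a+b=c+d$ and $b<d$. For linear codes $C_2\subsetneq C_1$, $M_1(C_1,C_2)=\min\{w_H(\vec c)\mid \vec c\in C_1\setminus C_2\}$. *)

(* Defs.v *)
From HB Require Import structures.
From mathcomp Require Import all_boot all_order all_algebra all_field.
Set Implicit Arguments. Unset Strict Implicit. Unset Printing Implicit Defensive.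
Import GRing.Theory.
Local Open Scope ring_scope.

Definition npts (F : finFieldType) (S1 S2 : {set F}) : nat := #|setX S1 S2|.

Definition alpha (F : finFieldType) (S1 S2 : {set F}) (k : 'I_(npts S1 S2)) : F * F :=
  @enum_val _ (mem (setX S1 S2)) k.

Definition evmon (F : finFieldType) (S1 S2 : {set F}) (a b : nat) : 'rV[F]_(npts S1 S2) :=
  \row_k ((alpha k).1 ^+ a * (alpha k).2 ^+ b).

(* Delta(s,s) = {X^a Y^b | 0 <= a, b < s}, monomial X^a Y^b encoded as (a, b). *)
Definition monom (s : nat) := ('I_s * 'I_s)%type.

(* C(L): the span of the evaluation vectors of N in L, as a row space (square matrix). *)
Definition code (F : finFieldType) (S1 S2 : {set F}) (s : nat) (L : {set monom s})
  : 'M[F]_(npts S1 S2) :=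
  (\sum_(m in L) <<evmon S1 S2 m.1 m.2>>)%MS.

Definition dual_code (F : finFieldType) (n : nat) (C : 'M[F]_n) : 'M[F]_n := kermx C^T.

Definition wH (F : finFieldType) (n : nat) (v : 'rV[F]_n) : nat :=
  #|[set k : 'I_n | v 0 k != 0]|.

(* M_1(C1, C2) = min { w_H(c) | c in C1 \ C2 }  (value n if C1 \ C2 is empty,
   which never happens when C2 is strictly contained in C1). *)
Definition M1 (F : finFieldType) (n : nat) (C1 C2 : 'M[F]_n) : nat :=
  \big[minn/n]_(v : 'rV[F]_n | (v <= C1)%MS && ~~ (v <= C2)%MS) wH v.

Definition mindist (F : finFieldType) (n : nat) (C : 'M[F]_n) : nat :=
  \big[minn/n]_(v : 'rV[F]_n | (v <= C)%MS && (v != 0)) wH v.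

Definition deg_lt (a b c d : nat) : bool :=
  ((a + b < c + d)%N || ((a + b == c + d) && (b < d)%N)).
Definition deg_le (a b c d : nat) : bool :=
  ((a + b < c + d)%N || ((a + b == c + d) && (b <= d)%N)).

(* Main.v *)
Require Import Defs.
From HB Require Import structures.
From mathcomp Require Import all_boot all_order all_algebra all_field zify ring.
Set Implicit Arguments. Unset Strict Implicit. Unset Printing Implicit Defensive.
Import GRing.Theory.
Local Open Scope ring_scope.

Lemma deg_le_ord (a b c d s : nat) : (b < s)%N -> (d < s)%N ->
  deg_le a b c d = ((a+b)*s + b <= (c+d)*s + d)%N.
Proof. move=> hb hd; rewrite /deg_le. apply/idP/idP.
- case/orP. move=> h. nia. case/andP=> /eqP h1 h2. nia.
- move=> h; apply/orP. case: (ltnP (a+b) (c+d)) => h1; [by left|right]. apply/andP; split. apply/eqP. nia. nia. Qed.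

Lemma deg_lt_ord (a b c d s : nat) : (b < s)%N -> (d < s)%N ->
  deg_lt a b c d = ((a+b)*s + b < (c+d)*s + d)%N.
Proof. move=> hb hd; rewrite /deg_lt. apply/idP/idP.
- case/orP. move=> h. nia. case/andP=> /eqP h1 h2. nia.
- move=> h; apply/orP. case: (ltnP (a+b) (c+d)) => h1; [by left|right]. apply/andP; split. apply/eqP. nia. nia. Qed.

Section Grid.
Variables (F : finFieldType) (S1 S2 : {set F}) (s : nat).
Hypotheses (hS1 : #|S1| = s) (hS2 : #|S2| = s).

Local Notation n := (npts S1 S2).
Local Notation ev := (evmon S1 S2).
Local Notation al := (@alpha F S1 S2).

Lemma npts_eq : n = (s * s)%N.
Proof. by rewrite /npts cardsX hS1 hS2. Qed.

Lemma alphaP (k : 'I_n) : ((al k).1 \in S1) && ((al k).2 \in S2).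
Proof. have := enum_valP k. by rewrite /alpha inE. Qed.

Definition Vg (P : nat -> nat -> bool) : 'M[F]_n :=
  (\sum_(m : monom s | P m.1 m.2) <<ev m.1 m.2>>)%MS.

Lemma Vg_gen (P : nat -> nat -> bool) a b (ha : (a < s)%N) (hb : (b < s)%N) : P a b -> (ev a b <= Vg P)%MS.
Proof. move=> hP; apply: (sumsmx_sup (Ordinal ha, Ordinal hb)) => //; by rewrite genmxE. Qed.

Lemma Vg_subP (P : nat -> nat -> bool) (X : 'M[F]_n) :
  (forall a b, (a < s)%N -> (b < s)%N -> P a b -> (ev a b <= X)%MS) -> (Vg P <= X)%MS.
Proof. move=> h; apply/sumsmx_subP => m Pm; rewrite genmxE; exact: h. Qed.

Lemma Vg_mono (P Q : nat -> nat -> bool) : (forall a b, (a < s)%N -> (b < s)%N -> P a b -> Q a b) -> (Vg P <= Vg Q)%MS.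
Proof. move=> h; apply: Vg_subP => a b ha hb hP; apply: (Vg_gen ha hb); exact: h ha hb hP. Qed.

Lemma Vg_eq (P Q : nat -> nat -> bool) : (forall a b, (a < s)%N -> (b < s)%N -> P a b = Q a b) -> Vg P = Vg Q.
Proof. move=> h; apply: eq_bigl => m; exact: h. Qed.

Lemma code_Vg (P : nat -> nat -> bool) : code S1 S2 [set N : monom s | P N.1 N.2] = Vg P.
Proof. apply: eq_bigl => m; by rewrite inE. Qed.

Definition dot (u w : 'rV[F]_n) : F := \sum_k u 0 k * w 0 k.

Lemma mul_tr (u w : 'rV[F]_n) : u *m w^T = (dot u w)%:M.
Proof. apply/matrixP => i j; rewrite !ord1 !mxE eqxx mulr1n; apply: eq_bigr => k _; by rewrite !mxE. Qed.

Lemma orthoE (u w : 'rV[F]_n) : (u <= kermx w^T)%MS = (dot u w == 0).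
Proof.
apply/sub_kermxP/eqP; rewrite mul_tr; last by move->; rewrite raddf0.
by move/matrixP/(_ 0 0); rewrite !mxE eqxx !mulr1n.
Qed.

Lemma Vg_ortho (P : nat -> nat -> bool) w u : (forall a b, (a < s)%N -> (b < s)%N -> P a b -> dot (ev a b) w = 0) ->
  (u <= Vg P)%MS -> dot u w = 0.
Proof.
move=> h hu; apply/eqP; rewrite -orthoE; apply: submx_trans hu _.
apply: Vg_subP => a b ha hb hP; rewrite orthoE; apply/eqP; exact: h.
Qed.

Lemma dualP (P : nat -> nat -> bool) v : (v <= dual_code (Vg P))%MS <->
  (forall a b, (a < s)%N -> (b < s)%N -> P a b -> dot (ev a b) v = 0).
Proof.
rewrite /dual_code; split.
- move/sub_kermxP => h a b ha hb hP; apply/eqP; rewrite -orthoE.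
  have h2 : (Vg P <= kermx v^T)%MS.
    apply/sub_kermxP; by rewrite -(trmxK (Vg P)) -trmx_mul h trmx0.
  by apply: submx_trans h2; apply: Vg_gen.
- move=> h; apply/sub_kermxP.
  have h2 : (Vg P <= kermx v^T)%MS.
    by apply: Vg_subP => a b ha hb hP; rewrite orthoE; apply/eqP; apply: h.
  move/sub_kermxP: h2 => h2; by rewrite -(trmxK v) -trmx_mul h2 trmx0.
Qed.

Lemma rank_sum_le (I : finType) (P : pred I) (A : I -> 'rV[F]_n) :
  (\rank (\sum_(i | P i) <<A i>>)%MS <= #|P|)%N.
Proof.
rewrite -sum1_card.
apply: (big_ind2 (fun (x : 'M[F]_n) (y : nat) => \rank x <= y)%N).
- by rewrite mxrank0.
- move=> x1 y1 x2 y2 h1 h2. apply: leq_trans (mxrank_adds_leqif _ _).1 _. exact: leq_add.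
- move=> i _; rewrite genmxE; exact: rank_leq_row.
Qed.

Lemma chain_rank (I : finType) (ord : I -> nat) (g : I -> 'rV[F]_n) (T : {set I}) :
  {in T &, injective ord} ->
  (forall i, i \in T -> ~~ (g i <= \sum_(j in T | (ord j < ord i)%N) <<g j>>)%MS) ->
  (#|T| <= \rank (\sum_(i in T) <<g i>>)%MS)%N.
Proof.
elim: {T}_.+1 {-2}T (ltnSn #|T|) => // k IH T hk inj hT.
case: (set_0Vmem T) => [->|[i0 Hi0]]; first by rewrite cards0.
pose i := [arg max_(i > i0 in T) ord i].
have [Ti imax] : i \in T /\ forall j, j \in T -> (ord j <= ord i)%N.
  by rewrite /i; case: arg_maxnP => // x Tx h; split.
have hT' : forall j, j \in T :\ i -> (ord j < ord i)%N.
  move=> j; rewrite !inE => /andP[jni jT]. rewrite ltn_neqAle imax // andbT.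
  apply/negP => /eqP e. by move/eqP: jni; apply; apply: inj.
have IH' : (#|T :\ i| <= \rank (\sum_(j in T :\ i) <<g j>>)%MS)%N.
  apply: IH.
  - by move: hk; rewrite (cardsD1 i T) Ti add1n ltnS.
  - by move=> x y; rewrite !inE => /andP[_ ?] /andP[_ ?]; apply: inj.
  - move=> j jT'; have jT : j \in T by move: jT'; rewrite inE => /andP[].
    rewrite (eq_bigl (fun x => (x \in T) && (ord x < ord j)%N)); first exact: hT.
    move=> x; rewrite !inE; case: (eqVneq x i) => [->|] //=.
    by rewrite Ti /= ltnNge ltnW // hT'.
rewrite (cardsD1 i T) Ti add1n (bigD1 i) //=.
set S' := (\sum_(j in T :\ i) <<g j>>)%MS in IH'.
have -> : (\sum_(j in T | j != i) <<g j>>)%MS = S'.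
  by apply: eq_bigl => x; rewrite !inE andbC.
apply: leq_ltn_trans IH' _; apply: rank_ltmx; rewrite ltmxE addsmxSr /=.
apply/negP => h.
have : (g i <= S')%MS by apply: submx_trans h; apply: submx_trans (addsmxSl _ _); rewrite genmxE.
move/submx_trans => /(_ _ (\sum_(j in T | (ord j < ord i)%N) <<g j>>)%MS) h2.
move: (hT i Ti); rewrite h2 //.
apply/sumsmx_subP => j jT'; apply: (sumsmx_sup j) => //.
by rewrite (hT' j jT') andbT; move: jT'; rewrite inE => /andP[].
Qed.

Definition wsupp (f : 'rV[F]_n) := [set k : 'I_n | f 0 k != 0].

Lemma rank_supp (I : finType) (P : pred I) (r : I -> 'rV[F]_n) (f : 'rV[F]_n) :
  (forall i k, P i -> f 0 k = 0 -> r i 0 k = 0) ->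
  (\rank (\sum_(i | P i) <<r i>>)%MS <= wH f)%N.
Proof.
move=> h.
pose D := (\sum_(k | k \in wsupp f) <<delta_mx 0 k : 'rV[F]_n>>)%MS.
apply: (@leq_trans (\rank D)); last exact: rank_sum_le.
apply: mxrankS; apply/sumsmx_subP => i Pi; rewrite genmxE.
rewrite (row_sum_delta (r i)); apply: summx_sub => k _.
case: (boolP (k \in wsupp f)) => hk.
  by apply: scalemx_sub; apply: (sumsmx_sup k) => //; rewrite genmxE.
by rewrite h ?scale0r ?sub0mx //; apply/eqP; move: hk; rewrite inE negbK.
Qed.


Lemma pow_reduce (S : {set F}) : #|S| = s -> exists beta : 'I_s -> F,
  forall x, x \in S -> x ^+ s = \sum_(k < s) beta k * x ^+ k.
Proof.
move=> hS. pose p := \prod_(t <- enum S) ('X - t%:P).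
have sp : size p = s.+1 by rewrite size_prod_XsubC -cardE hS.
have mp : p \is monic by apply: monic_prod_XsubC.
have lc : p`_s = 1 by rewrite -(monicP mp) lead_coefE sp.
exists (fun k => - p`_k) => x xS.
have : p.[x] = 0 by apply/eqP; rewrite -/(root p x) root_prod_XsubC mem_enum.
rewrite horner_coef sp big_ord_recr /= lc mul1r addrC => /eqP; rewrite addr_eq0 => /eqP ->.
by rewrite -sumrN; apply: eq_bigr => k _; rewrite mulNr.
Qed.

Lemma ev_red c d : (ev c d <= Vg (fun a b => deg_le a b c d))%MS.
Proof.
move: (ltnSn (c + d)); move: {2}(c+d).+1 => t; elim: t c d => [|t IH] c d hcd //.
case: (ltnP c s) => hc; case: (ltnP d s) => hd.
- by apply: (Vg_gen hc hd); rewrite /deg_le; lia.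
- have [beta hb] := pow_reduce hS2.
  have -> : ev c d = \sum_(k < s) beta k *: ev c (d - s + k).
    apply/rowP => k; rewrite !mxE summxE.
    have /andP[_ h2] := alphaP k.
    rewrite -{1}(subnK hd) exprD hb // mulr_sumr mulr_sumr; apply: eq_bigr => j _.
    by rewrite !mxE exprD; ring.
  apply: summx_sub => j _; apply: scalemx_sub.
  apply: submx_trans (IH _ _ _) _; first by have := ltn_ord j; lia.
  apply: Vg_mono => a b _ _; rewrite /deg_le; have := ltn_ord j; lia.
- have [beta hb] := pow_reduce hS1.
  have -> : ev c d = \sum_(k < s) beta k *: ev (c - s + k) d.
    apply/rowP => k; rewrite !mxE summxE.
    have /andP[h1 _] := alphaP k.
    rewrite -{1}(subnK hc) exprD hb // mulr_sumr mulr_suml; apply: eq_bigr => j _.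
    by rewrite !mxE exprD; ring.
  apply: summx_sub => j _; apply: scalemx_sub.
  apply: submx_trans (IH _ _ _) _; first by have := ltn_ord j; lia.
  apply: Vg_mono => a b _ _; rewrite /deg_le; have := ltn_ord j; lia.
- have [beta hb] := pow_reduce hS1.
  have -> : ev c d = \sum_(k < s) beta k *: ev (c - s + k) d.
    apply/rowP => k; rewrite !mxE summxE.
    have /andP[h1 _] := alphaP k.
    rewrite -{1}(subnK hc) exprD hb // mulr_sumr mulr_suml; apply: eq_bigr => j _.
    by rewrite !mxE exprD; ring.
  apply: summx_sub => j _; apply: scalemx_sub.
  apply: submx_trans (IH _ _ _) _; first by have := ltn_ord j; lia.
  apply: Vg_mono => a b _ _; rewrite /deg_le; have := ltn_ord j; lia.
Qed.

Definition evpq (p q : {poly F}) : 'rV[F]_n :=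
  \row_k (p.[(al k).1] * q.[(al k).2]).

Lemma evpq_expand (p q : {poly F}) : evpq p q = \sum_(a < size p) \sum_(b < size q) (p`_a * q`_b) *: ev a b.
Proof.
apply/rowP => k; rewrite !mxE !horner_coef summxE mulr_suml; apply: eq_bigr => a _.
rewrite summxE mulr_sumr; apply: eq_bigr => b _; rewrite !mxE; ring.
Qed.

Lemma evpq_sub (p q : {poly F}) (P : nat -> nat -> bool) : (size p <= s)%N -> (size q <= s)%N ->
  (forall a b, (a < size p)%N -> (b < size q)%N -> P a b) -> (evpq p q <= Vg P)%MS.
Proof.
move=> sp sq h; rewrite evpq_expand; apply: summx_sub => a _; apply: summx_sub => b _.
apply: scalemx_sub; apply: Vg_gen; first (by apply: leq_trans sp); first (by apply: leq_trans sq).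
by apply: h.
Qed.

Definition pset (A : {set F}) : {poly F} := \prod_(t <- enum A) ('X - t%:P).

Lemma size_pset (A : {set F}) : size (pset A) = #|A|.+1.
Proof. by rewrite size_prod_XsubC -cardE. Qed.

Lemma pset_monic (A : {set F}) : pset A \is monic.
Proof. exact: monic_prod_XsubC. Qed.

Lemma pset_nz (A : {set F}) (x : F) : (pset A).[x] != 0 = (x \notin A).
Proof. by rewrite -/(root _ x) root_prod_XsubC mem_enum. Qed.

Lemma Vg_full : (1%:M <= Vg (fun _ _ => true))%MS.
Proof.
apply/row_subP => k; rewrite row1.
set x := (al k).1; set y := (al k).2.
have /andP[xS yS] := alphaP k.
pose p := pset (S1 :\ x); pose q := pset (S2 :\ y).
have nz : p.[x] * q.[y] != 0 by rewrite mulf_neq0 // pset_nz !inE eqxx.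
have hev : evpq p q = (p.[x] * q.[y]) *: delta_mx 0 k.
  apply/rowP => k'; rewrite !mxE eqxx /=.
  case: (eqVneq k' k) => [->|ne]; first by rewrite mulr1.
  rewrite mulr0; apply/eqP; rewrite mulf_eq0.
  have /andP[x'S y'S] := alphaP k'.
  have hne : al k' != al k by apply: contra ne => /eqP /enum_val_inj ->.
  have hxy : ((al k').1 != x) || ((al k').2 != y).
    move: hne; rewrite /x /y; case: (al k') => a1 a2; case: (al k) => b1 b2.
    by rewrite xpair_eqE negb_and.
  case/orP: hxy => h; [apply/orP; left | apply/orP; right];
    apply/negPn; rewrite pset_nz negbK !inE h //.
have -> : delta_mx 0 k = (p.[x] * q.[y])^-1 *: evpq p q.
  by rewrite hev scalerA mulVf // scale1r.
apply: scalemx_sub; apply: evpq_sub => //.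
- by rewrite size_pset; move: hS1; rewrite (cardsD1 x S1) xS => <-.
- by rewrite size_pset; move: hS2; rewrite (cardsD1 y S2) yS => <-.
Qed.

Lemma ev_indep a b : (a < s)%N -> (b < s)%N ->
  ~~ (ev a b <= Vg (fun a' b' => (a' != a) || (b' != b)))%MS.
Proof.
move=> ha hb; apply/negP => h.
have : (1%:M <= Vg (fun a' b' => (a' != a) || (b' != b)))%MS.
  apply: submx_trans Vg_full _; apply/sumsmx_subP => m _; rewrite genmxE.
  case: (boolP ((m.1 != a :> nat) || (m.2 != b :> nat))) => hm.
    exact: (Vg_gen (ltn_ord m.1) (ltn_ord m.2)).
  by move: hm; rewrite negb_or !negbK => /andP[/eqP-> /eqP->].
move/mxrankS; rewrite mxrank1; apply/negP; rewrite -ltnNge.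
pose m0 : monom s := (Ordinal ha, Ordinal hb).
apply: leq_ltn_trans (rank_sum_le _ _) _.
rewrite (@eq_card _ _ (predC1 m0)); last first.
  by case=> [[x hx] [y hy]]; rewrite !inE /= xpair_eqE negb_and.
rewrite cardC1 card_prod !card_ord npts_eq.
have s0 : (0 < s)%N by lia.
by rewrite ltn_predL muln_gt0 s0.
Qed.

Lemma ev_notlt a b : (a < s)%N -> (b < s)%N ->
  ~~ (ev a b <= Vg (fun a' b' => deg_lt a' b' a b))%MS.
Proof.
move=> ha hb; apply: contra (ev_indep ha hb) => h; apply: submx_trans h _.
apply: Vg_mono => a' b' _ _; rewrite /deg_lt; lia.
Qed.

Lemma lead_exists (f : 'rV[F]_n) : f != 0 -> exists a b, [/\ (a < s)%N, (b < s)%N,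
  (f <= Vg (fun a' b' => deg_le a' b' a b))%MS &
  ~~ (f <= Vg (fun a' b' => deg_lt a' b' a b))%MS].
Proof.
move=> fnz.
pose W t := Vg (fun a b => ((a+b)*s + b < t)%N).
have ex : exists t, (f <= W t)%MS.
  exists (s * s * 2)%N; apply: submx_trans (submx1 f) _; apply: submx_trans Vg_full _.
  by apply: Vg_mono => a b ha hb _; nia.
case: (ex_minnP ex) => t ht tmin.
case: t ht tmin => [|t'] ht tmin.
  exfalso; move: fnz; rewrite -submx0 => /negP; apply; apply: submx_trans ht _.
  by apply/sumsmx_subP.
have nt' : ~~ (f <= W t')%MS by apply/negP => /tmin; rewrite ltnn.
case: (boolP [exists m : monom s, ((m.1 + m.2)*s + m.2)%N == t']) => [/existsP[m /eqP hm]|].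
  exists m.1, m.2; split => //.
  - apply: submx_trans ht _; apply: Vg_mono => a b ha hb.
    by rewrite (deg_le_ord _ _ hb (ltn_ord m.2)) hm ltnS.
  - apply: contra nt' => h; apply: submx_trans h _; apply: Vg_mono => a b ha hb.
    by rewrite (deg_lt_ord _ _ hb (ltn_ord m.2)) hm.
move/existsPn => hno; exfalso; move/negP: nt'; apply.
have <- : W t'.+1 = W t' => //.
apply: Vg_eq => a b ha hb; rewrite ltnS leq_eqVlt.
case: eqP => // e; have := hno (Ordinal ha, Ordinal hb); by rewrite /= e eqxx.
Qed.

Lemma ev_mul a b u v : ev a b *m diag_mx (ev u v) = ev (a + u) (b + v).
Proof. rewrite mul_mx_diag; apply/rowP => k; rewrite !mxE !exprD; ring. Qed.

Lemma Vg_mul_sub (P : nat -> nat -> bool) u v (X : 'M[F]_n) :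
  (forall a b, (a < s)%N -> (b < s)%N -> P a b -> (ev (a + u) (b + v) <= X)%MS) ->
  (Vg P *m diag_mx (ev u v) <= X)%MS.
Proof.
move=> h; rewrite /Vg sumsmxMr; apply/sumsmx_subP => m Pm.
rewrite (eqmxMr _ (genmxE _)) ev_mul; exact: h.
Qed.

Lemma footprint (f : 'rV[F]_n) a b : (a < s)%N -> (b < s)%N ->
  (f <= Vg (fun a' b' => deg_le a' b' a b))%MS ->
  ~~ (f <= Vg (fun a' b' => deg_lt a' b' a b))%MS ->
  ((s - a) * (s - b) <= wH f)%N.
Proof.
move=> ha hb hle hlt.
have : (f <= ev a b + Vg (fun a' b' => deg_lt a' b' a b))%MS.
  apply: submx_trans hle _; apply: Vg_subP => a' b' ha' hb' hab.
  case: (boolP (deg_lt a' b' a b)) => h.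
    by apply: submx_trans (addsmxSr _ _); apply: Vg_gen.
  have [-> ->] : a' = a /\ b' = b by move: hab h; rewrite /deg_le /deg_lt; lia.
  exact: addsmxSl.
case/sub_addsmxP => [[u w]] /= fE.
set c := u 0 0.
set w0 := w *m _ in fE.
have w0s : (w0 <= Vg (fun a' b' => deg_lt a' b' a b))%MS by apply: submxMl.
have fE' : f = c *: ev a b + w0.
  by rewrite fE [u]mx11_scalar mul_scalar_mx.
have cnz : c != 0.
  apply: contra hlt => /eqP c0; by rewrite fE' c0 scale0r add0r.
pose I := ('I_(s - a) * 'I_(s - b))%type.
pose g (x : I) := f *m diag_mx (ev x.1 x.2).
pose ord (x : I) := ((x.1 + x.2) * s + x.2)%N.
have hb2 : forall x : I, (x.2 < s)%N by move=> x; have := ltn_ord x.2; lia.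
have haX : forall x : I, (a + x.1 < s)%N by move=> x; have := ltn_ord x.1; lia.
have hbX : forall x : I, (b + x.2 < s)%N by move=> x; have := ltn_ord x.2; lia.
have gle : forall x : I, (g x <= Vg (fun a' b' => deg_le a' b' (a + x.1) (b + x.2)))%MS.
  move=> x; rewrite /g; apply: submx_trans (submxMr _ hle) _.
  apply: Vg_mul_sub => a' b' _ _ h; apply: submx_trans (ev_red _ _) _.
  apply: Vg_mono => a'' b'' _ _; move: h; rewrite /deg_le; lia.
have gnot : forall x : I, ~~ (g x <= Vg (fun a' b' => deg_lt a' b' (a + x.1) (b + x.2)))%MS.
  move=> x; apply/negP => h.
  have h2 : (w0 *m diag_mx (ev x.1 x.2) <= Vg (fun a' b' => deg_lt a' b' (a + x.1) (b + x.2)))%MS.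
    apply: submx_trans (submxMr _ w0s) _.
    apply: Vg_mul_sub => a' b' _ _ h'; apply: submx_trans (ev_red _ _) _.
    apply: Vg_mono => a'' b'' _ _; move: h'; rewrite /deg_le /deg_lt; lia.
  have : (c *: ev (a + x.1) (b + x.2) <= Vg (fun a' b' => deg_lt a' b' (a + x.1) (b + x.2)))%MS.
    have -> : c *: ev (a + x.1) (b + x.2) = g x - w0 *m diag_mx (ev x.1 x.2).
      by rewrite /g fE' mulmxDl -scalemxAl ev_mul addrK.
    by apply: addmx_sub => //; rewrite -scaleN1r; apply: scalemx_sub.
  move/(scalemx_sub c^-1); rewrite scalerA mulVf // scale1r.
  by apply/negP; apply: ev_notlt.
have card : #|[set: I]| = ((s - a) * (s - b))%N by rewrite cardsT card_prod !card_ord.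
rewrite -card.
apply: leq_trans (@chain_rank I ord g [set: I] _ _) _.
- move=> x y _ _ e.
  have e' := e; rewrite /ord in e'.
  have h1 : ~~ deg_lt x.1 x.2 y.1 y.2 by rewrite (deg_lt_ord _ _ (hb2 _) (hb2 _)) e' ltnn.
  have h2 : ~~ deg_lt y.1 y.2 x.1 x.2 by rewrite (deg_lt_ord _ _ (hb2 _) (hb2 _)) e' ltnn.
  case: x y {e e'} h1 h2 => [x1 x2] [y1 y2] /= h1 h2.
  have e1 : (x1 : nat) = y1 by move: h1 h2; rewrite /deg_lt; lia.
  have e2 : (x2 : nat) = y2 by move: h1 h2; rewrite /deg_lt; lia.
  by congr (_, _); apply: val_inj.
- move=> x _; apply: contra (gnot x) => h; apply: submx_trans h _.
  apply/sumsmx_subP => y /andP[_ hy]; rewrite genmxE.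
  apply: submx_trans (gle y) _; apply: Vg_mono => a' b' _ _.
  rewrite /ord -(deg_lt_ord _ _ (hb2 y) (hb2 x)) in hy. move: hy; rewrite /deg_le /deg_lt; lia.
- apply: rank_supp => x k _ hk; by rewrite /g mul_mx_diag mxE hk mul0r.
Qed.

Lemma dot_diag (v : 'rV[F]_n) a b c d : dot (v *m diag_mx (ev a b)) (ev c d) = dot (ev (a + c) (b + d)) v.
Proof. rewrite /dot; apply: eq_bigr => k _; rewrite mul_mx_diag !mxE !exprD; ring. Qed.

Lemma dual_footprint (v : 'rV[F]_n) a b :
  (forall a' b', deg_lt a' b' a b -> dot (ev a' b') v = 0) -> dot (ev a b) v != 0 ->
  (a.+1 * b.+1 <= wH v)%N.
Proof.
move=> h0 hN.
pose I := ('I_a.+1 * 'I_b.+1)%type.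
pose r (x : I) := v *m diag_mx (ev x.1 x.2).
pose ord (x : I) := ((x.1 + x.2) * b.+1 + x.2)%N.
have hb2 : forall x : I, (x.2 < b.+1)%N by move=> x; exact: ltn_ord.
have card : #|[set: I]| = (a.+1 * b.+1)%N by rewrite cardsT card_prod !card_ord.
rewrite -card.
apply: leq_trans (@chain_rank I ord r [set: I] _ _) _.
- move=> x y _ _ e.
  have e' := e; rewrite /ord in e'.
  have h1 : ~~ deg_lt x.1 x.2 y.1 y.2 by rewrite (deg_lt_ord _ _ (hb2 _) (hb2 _)) e' ltnn.
  have h2 : ~~ deg_lt y.1 y.2 x.1 x.2 by rewrite (deg_lt_ord _ _ (hb2 _) (hb2 _)) e' ltnn.
  case: x y {e e'} h1 h2 => [x1 x2] [y1 y2] /= h1 h2.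
  have e1 : (x1 : nat) = y1 by move: h1 h2; rewrite /deg_lt; lia.
  have e2 : (x2 : nat) = y2 by move: h1 h2; rewrite /deg_lt; lia.
  by congr (_, _); apply: val_inj.
- move=> x _; apply/negP => h.
  have hk : (\sum_(y in [set: I] | (ord y < ord x)%N) <<r y>> <= kermx (ev (a - x.1) (b - x.2))^T)%MS.
    apply/sumsmx_subP => y /andP[_ hy]; rewrite genmxE orthoE /r dot_diag h0 //.
    rewrite /ord -(deg_lt_ord _ _ (hb2 y) (hb2 x)) in hy.
    have := ltn_ord x.1; have := ltn_ord x.2; move: hy; rewrite /deg_lt; move: (y.1 : nat) (y.2 : nat) (x.1 : nat) (x.2 : nat) => y1 y2 x1 x2; lia.
  move: (submx_trans h hk); rewrite orthoE /r dot_diag.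
  have -> : (x.1 + (a - x.1))%N = a by have := ltn_ord x.1; lia.
  have -> : (x.2 + (b - x.2))%N = b by have := ltn_ord x.2; lia.
  by rewrite (negPf hN).
- apply: rank_supp => x k _ hk; by rewrite /r mul_mx_diag mxE hk mul0r.
Qed.

Lemma sub_card (S : {set F}) k : (k <= #|S|)%N -> exists A : {set F}, A \subset S /\ #|A| = k.
Proof.
move=> hk; exists [set x in take k (enum S)]; split.
  by apply/subsetP => x; rewrite inE => /mem_take; rewrite mem_enum.
have u := take_uniq k (enum_uniq (mem S)).
by rewrite cardsE; move/card_uniqP: u ->; rewrite size_takel // -cardE.
Qed.

Lemma card_al (Z : {set F * F}) : Z \subset setX S1 S2 ->
  #|[set k : 'I_n | al k \in Z]| = #|Z|.
Proof.
move=> hZ.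
have e : al @: [set k : 'I_n | al k \in Z] = Z.
  apply/setP => z; apply/imsetP/idP.
    by case=> k; rewrite inE => hk ->.
  move=> zZ; have zX : z \in setX S1 S2 by apply: (subsetP hZ).
  exists (enum_rank_in zX z); last by rewrite /alpha enum_rankK_in.
  by rewrite inE /alpha enum_rankK_in.
by rewrite -{2}e card_imset //; exact: enum_val_inj.
Qed.

Lemma witness a b : (a < s)%N -> (b < s)%N -> exists f : 'rV[F]_n,
  [/\ (f <= Vg (fun a' b' => (a' <= a)%N && (b' <= b)%N))%MS,
      ~~ (f <= Vg (fun a' b' => deg_lt a' b' a b))%MS
    & wH f = ((s - a) * (s - b))%N].
Proof.
move=> ha hb.
have [A [AS hA]] : exists A : {set F}, A \subset S1 /\ #|A| = a by apply: sub_card; lia.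
have [B [BS hB]] : exists B : {set F}, B \subset S2 /\ #|B| = b by apply: sub_card; lia.
pose p := pset A; pose q := pset B.
have sp : size p = a.+1 by rewrite size_pset hA.
have sq : size q = b.+1 by rewrite size_pset hB.
have pa : p`_a = 1 by rewrite -(monicP (pset_monic A)) lead_coefE sp.
have qb : q`_b = 1 by rewrite -(monicP (pset_monic B)) lead_coefE sq.
exists (evpq p q); split.
- by apply: evpq_sub; rewrite ?sp ?sq // => a' b'; rewrite !ltnS => -> ->.
- apply/negP => h.
  have : (evpq p q - ev a b <= Vg (fun a' b' => deg_lt a' b' a b))%MS.
    rewrite evpq_expand sp sq big_ord_recr /= [X in _ + X - _]big_ord_recr /= pa qb mulr1 scale1r.
    rewrite addrA addrK; apply: addmx_sub; apply: summx_sub => i _.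
      apply: summx_sub => j _; apply: scalemx_sub; apply: Vg_gen; try lia.
        by have := ltn_ord i; lia.
        by have := ltn_ord j; lia.
      by have := ltn_ord i; have := ltn_ord j; rewrite /deg_lt; lia.
    apply: scalemx_sub; apply: Vg_gen => //; by have := ltn_ord i; rewrite /deg_lt; lia.
  move=> h2; have : (ev a b <= Vg (fun a' b' => deg_lt a' b' a b))%MS.
    have -> : ev a b = evpq p q - (evpq p q - ev a b) by rewrite opprB addrC subrK.
    by apply: addmx_sub => //; rewrite -scaleN1r; apply: scalemx_sub.
  by apply/negP; apply: ev_notlt.
- have -> : ((s - a) * (s - b))%N = (#|S1 :\: A| * #|S2 :\: B|)%N.
    by rewrite !cardsD (setIidPr AS) (setIidPr BS) hS1 hS2 hA hB.
  rewrite /wH (_ : [set k | _] = [set k : 'I_n | al k \in setX (S1 :\: A) (S2 :\: B)]).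
    rewrite card_al ?cardsX //; apply/subsetP => z; rewrite !inE.
    by case/andP => /andP[_ ->] /andP[_ ->].
  apply/setP => k; rewrite !inE mxE mulf_eq0 negb_or !pset_nz.
  by have /andP[-> ->] := alphaP k; rewrite !andbT.
Qed.

Lemma bigmin_le (T : finType) (P : pred T) (Fw : T -> nat) x0 i0 :
  P i0 -> (\big[minn/x0]_(i | P i) Fw i <= Fw i0)%N.
Proof.
move=> Pi0; rewrite -big_filter.
have : i0 \in [seq i <- index_enum T | P i] by rewrite mem_filter Pi0 mem_index_enum.
elim: [seq _ <- _ | _] => // y r IH; rewrite in_cons big_cons => /orP[/eqP<-|/IH h].
  exact: geq_minl.
by rewrite geq_min h orbT.
Qed.

Lemma M1_lb (C1 C2 : 'M[F]_n) B : (B <= n)%N ->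
  (forall v : 'rV[F]_n, (v <= C1)%MS -> ~~ (v <= C2)%MS -> (B <= wH v)%N) -> (B <= M1 C1 C2)%N.
Proof.
move=> hn h; rewrite /M1; apply: (big_ind (fun x => B <= x)%N) => //.
- by move=> x y hx hy; rewrite leq_min hx hy.
- by move=> v /andP[h1 h2]; apply: h.
Qed.

Lemma M1_ub (C1 C2 : 'M[F]_n) v : (v <= C1)%MS -> ~~ (v <= C2)%MS -> (M1 C1 C2 <= wH v)%N.
Proof. by move=> h1 h2; apply: bigmin_le; rewrite h1 h2. Qed.

Lemma md_lb (C : 'M[F]_n) B : (B <= n)%N ->
  (forall v : 'rV[F]_n, (v <= C)%MS -> v != 0 -> (B <= wH v)%N) -> (B <= mindist C)%N.
Proof.
move=> hn h; rewrite /mindist; apply: (big_ind (fun x => B <= x)%N) => //.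
- by move=> x y hx hy; rewrite leq_min hx hy.
- by move=> v /andP[h1 h2]; apply: h.
Qed.

Lemma md_ub (C : 'M[F]_n) v : (v <= C)%MS -> v != 0 -> (mindist C <= wH v)%N.
Proof. by move=> h1 h2; apply: bigmin_le; rewrite h1 h2. Qed.

Section Core.
Variables (I J : nat).
Hypotheses (hIJ : (I <= J)%N) (hJ : (J < s)%N).
Definition P1 := fun a b => deg_le a b I J.
Definition P2 := fun a b => deg_lt a b J I.

Lemma core_lead (f : 'rV[F]_n) : (f <= Vg P1)%MS -> ~~ (f <= Vg P2)%MS ->
  exists a b, [/\ (a < s)%N, (b < s)%N, (a + b = I + J)%N, (I <= b <= J)%N &
   ((f <= Vg (fun a' b' => deg_le a' b' a b)) && ~~ (f <= Vg (fun a' b' => deg_lt a' b' a b)))%MS].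
Proof.
move=> h1 h2.
have fnz : f != 0 by apply: contra h2 => /eqP ->; exact: sub0mx.
have [a [b [ha hb hle hlt]]] := lead_exists fnz.
have c1 : deg_le a b I J.
  apply/negP => hn; move/negP: hlt; apply; apply: submx_trans h1 _.
  apply: Vg_mono => a' b' _ _; move: hn; rewrite /P1 /deg_le /deg_lt; lia.
have c2 : deg_le J I a b.
  apply/negP => hn; move/negP: h2; apply; apply: submx_trans hle _.
  apply: Vg_mono => a' b' _ _; move: hn; rewrite /P2 /deg_le /deg_lt; lia.
exists a, b; split => //; [move: c1 c2; rewrite /deg_le; lia | move: c1 c2; rewrite /deg_le; lia | by rewrite hle hlt].
Qed.

Lemma core_M1 : M1 (Vg P1) (Vg P2) = ((s - I) * (s - J))%N.
Proof.
apply/eqP; rewrite eqn_leq; apply/andP; split; last first.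
  apply: M1_lb; first by rewrite npts_eq; apply: leq_mul; apply: leq_subr.
  move=> v h1 h2; have [a [b [ha hb hab hb2 /andP[hle hlt]]]] := core_lead h1 h2.
  apply: leq_trans (footprint ha hb hle hlt); nia.
have hI : (I < s)%N by lia.
have [f [h1 h2 h3]] := witness hI hJ.
rewrite -h3; apply: M1_ub.
  by apply: submx_trans h1 _; apply: Vg_mono => a b _ _; rewrite /P1 /deg_le; lia.
apply: contra h2 => h; apply: submx_trans h _; apply: Vg_mono => a b _ _; rewrite /P2 /deg_lt; lia.
Qed.

Lemma core_dual : (I.+1 * J.+1 <= M1 (dual_code (Vg P2)) (dual_code (Vg P1)))%N.
Proof.
apply: M1_lb; first by rewrite npts_eq; apply: leq_mul; lia.
move=> v /dualP h2 h1.
case: (boolP [exists m : monom s, P1 m.1 m.2 && (dot (ev m.1 m.2) v != 0)]) => [/existsP [m0 hm0] | /existsPn hn]; last first.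
  exfalso; move/negP: h1; apply; apply/dualP => a b ha hb hP.
  by have := hn (Ordinal ha, Ordinal hb); rewrite /= hP /= negbK => /eqP.
pose ord (m : monom s) := ((m.1 + m.2) * s + m.2)%N.
case: (@arg_minnP _ m0 (fun m : monom s => P1 m.1 m.2 && (dot (ev m.1 m.2) v != 0)) ord hm0) => m /andP[hP hd] hmin.
apply: (@leq_trans (m.1.+1 * m.2.+1)).
  have e1 : ~~ P2 m.1 m.2 by apply: contra hd => hP2; apply/eqP; apply: h2.
  move: hP e1; rewrite /P1 /P2 /deg_le /deg_lt; have := ltn_ord m.1; have := ltn_ord m.2.
  move: (m.1 : nat) (m.2 : nat) => a b; nia.
apply: dual_footprint hd => a' b' hlt.
apply: Vg_ortho (ev_red a' b') => a b ha hb hle.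
apply/eqP; apply/negPn/negP => hnz.
have hP' : P1 a b && (dot (ev a b) v != 0).
  by rewrite hnz andbT; move: hle hlt hP; rewrite /P1 /deg_le /deg_lt; lia.
have := hmin (Ordinal ha, Ordinal hb) hP'; rewrite /ord /=.
rewrite -(deg_le_ord _ _ (ltn_ord m.2) hb).
by move: hle hlt; rewrite /deg_le /deg_lt; move: (m.1 : nat) (m.2 : nat) => x y; lia.
Qed.

Lemma core_card : (#|[set N : monom s | deg_le N.1 N.2 I J]| - #|[set N : monom s | deg_lt N.1 N.2 J I]|)%N = (J - I).+1.
Proof.
have sub : [set N : monom s | deg_lt N.1 N.2 J I] \subset [set N : monom s | deg_le N.1 N.2 I J].
  by apply/subsetP => N; rewrite !inE /deg_le /deg_lt; lia.
rewrite -(setIidPr sub) -cardsD.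
have hA : forall k : 'I_(J - I).+1, (J - k < s)%N by move=> k; lia.
have hB : forall k : 'I_(J - I).+1, (I + k < s)%N by move=> k; have := ltn_ord k; lia.
pose g (k : 'I_(J - I).+1) : monom s := (Ordinal (hA k), Ordinal (hB k)).
have -> : [set N : monom s | deg_le N.1 N.2 I J] :\: [set N : monom s | deg_lt N.1 N.2 J I] = g @: setT.
  apply/setP => N; rewrite !inE; apply/idP/imsetP.
    move=> h; have hk : (N.2 - I < (J - I).+1)%N by move: h; rewrite /deg_le /deg_lt; move: (N.1 : nat) (N.2 : nat) => x y; lia.
    exists (Ordinal hk) => //; case: N h hk => [[x hx] [y hy]] /= h hk.
    by congr (_, _); apply: val_inj => /=; move: h; rewrite /deg_le /deg_lt; lia.
  case=> k _ ->; rewrite /= /deg_le /deg_lt; have := ltn_ord k; lia.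
rewrite card_imset ?cardsT ?card_ord //.
by move=> k1 k2 /(congr1 (fun N => val N.2)) /= e; apply: val_inj => /=; lia.
Qed.

End Core.

Lemma md_lead I J (v : 'rV[F]_n) : (v <= Vg (fun a b => deg_le a b I J))%MS -> v != 0 ->
  exists a b, [/\ (a < s)%N, (b < s)%N, (a + b <= I + J)%N & ((s - a) * (s - b) <= wH v)%N].
Proof.
move=> h1 vnz; have [a [b [ha hb hle hlt]]] := lead_exists vnz.
have c1 : deg_le a b I J.
  apply/negP => hn; move/negP: hlt; apply; apply: submx_trans h1 _.
  apply: Vg_mono => a' b' _ _; move: hn; rewrite /deg_le /deg_lt; lia.
exists a, b; split => //; first by move: c1; rewrite /deg_le; lia.
exact: footprint.
Qed.

Lemma md_part1 I J : (I <= J)%N -> (I + J < s)%N ->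
  mindist (Vg (fun a b => deg_le a b I J)) = (s * (s - (I + J)))%N.
Proof.
move=> hIJ hs; apply/eqP; rewrite eqn_leq; apply/andP; split; last first.
  apply: md_lb; first by rewrite npts_eq; apply: leq_mul => //; exact: leq_subr.
  move=> v h1 h2; have [a [b [ha hb hab hw]]] := md_lead h1 h2.
  apply: leq_trans hw; nia.
have hs' : (I + J < s)%N := hs. have h0 : (0 < s)%N by lia.
have [f [h1 h2 h3]] := witness hs' h0.
have fnz : f != 0 by apply: contra h2 => /eqP ->; exact: sub0mx.
apply: leq_trans (md_ub _ fnz) _.
  by apply: submx_trans h1 _; apply: Vg_mono => a b _ _; rewrite /deg_le; lia.
by rewrite h3 subn0 mulnC.
Qed.

Lemma md_part2 I J sg : (I <= J)%N -> (J < s)%N -> (I + J + sg = 2 * s - 2)%N -> (s.-1 - sg <= J)%N -> (sg < s)%N ->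
  mindist (Vg (fun a b => deg_le a b I J)) = sg.+1.
Proof.
move=> hIJ hJ hsum hsg hsgs; apply/eqP; rewrite eqn_leq; apply/andP; split; last first.
  apply: md_lb; first by rewrite npts_eq; nia.
  move=> v h1 h2; have [a [b [ha hb hab hw]]] := md_lead h1 h2.
  apply: leq_trans hw; nia.
have ha : (s.-1 < s)%N by lia.
have hb : (s.-1 - sg < s)%N by lia.
have [f [h1 h2 h3]] := witness ha hb.
have fnz : f != 0 by apply: contra h2 => /eqP ->; exact: sub0mx.
apply: leq_trans (md_ub _ fnz) _.
  by apply: submx_trans h1 _; apply: Vg_mono => a b _ _; rewrite /deg_le; lia.
rewrite h3; have -> : (s - s.-1 = 1)%N by lia.
by rewrite mul1n; lia.
Qed.

End Grid.

Lemma arA1 s i j : (1 <= i)%N -> (i <= j)%N -> (i + j < s)%N -> (s * (s - (i + j)) < (s - i) * (s - j))%N.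
Proof. move=> h1 h2 h3. have -> : s = (i + j + (s - (i+j)))%N by lia. set t := (s - (i+j))%N.
have -> : (i + j + t - (i+j) = t)%N by lia. have -> : (i + j + t - i = j + t)%N by lia. have -> : (i + j + t - j = i + t)%N by lia. nia. Qed.
Lemma arA3 i j : (1 <= i)%N -> (i <= j)%N -> ((i + j).+1 < i.+1 * j.+1)%N.
Proof. move=> h1 h2; nia. Qed.

Lemma proper_L (I J s : nat) : (I <= J)%N -> (J < s)%N ->
  [set N : monom s | deg_lt N.1 N.2 J I] \proper [set N : monom s | deg_le N.1 N.2 I J].
Proof.
move=> hij hjs; rewrite properE; apply/andP; split.
  by apply/subsetP => N; rewrite !inE /deg_le /deg_lt; lia.
apply/subsetPn; exists (Ordinal (leq_ltn_trans hij hjs), Ordinal hjs); rewrite !inE /deg_le /deg_lt /=; lia.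
Qed.

Unset Implicit Arguments.

Theorem mainTheorem6 (F : finFieldType) (S1 S2 : {set F}) (s sigma l : nat)
  (hS1 : #|S1| = s) (hS2 : #|S2| = s) (hsigma : (sigma < s)%N)
  (hl0 : (0 < l)%N) (hl : (l <= sigma + 1)%N) (hpar : ~~ odd l = odd sigma) :
  (* (1) *)
  (let i := ((sigma + 1 - l)./2)%N in
   let j := ((sigma + l - 1)./2)%N in
   let L1 := [set N : monom s | deg_le N.1 N.2 i j] in
   let L2 := [set N : monom s | deg_lt N.1 N.2 j i] in
   [/\ L2 \proper L1,
       (#|L1| - #|L2|)%N = l,
       M1 (code S1 S2 L1) (code S1 S2 L2)
         = ((s - (sigma + 1 - l)./2) * (s - (sigma + l - 1)./2))%N,
       (((sigma + 3 - l)./2) * ((sigma + l + 1)./2)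
         <= M1 (dual_code (code S1 S2 L2)) (dual_code (code S1 S2 L1)))%N
     & (l <= sigma - 1)%N ->
       mindist (code S1 S2 L1) = (s * (s - sigma))%N /\
       (mindist (code S1 S2 L1) < M1 (code S1 S2 L1) (code S1 S2 L2))%N])
  /\
  (* (2) *)
  (exists L1 L2 : {set monom s},
   [/\ L2 \proper L1,
       (#|L1| - #|L2|)%N = l,
       M1 (code S1 S2 L1) (code S1 S2 L2)
         = (((sigma + 3 - l)./2) * ((sigma + l + 1)./2))%N,
       ((s - (sigma + 1 - l)./2) * (s - (sigma + l - 1)./2)
         <= M1 (dual_code (code S1 S2 L2)) (dual_code (code S1 S2 L1)))%N
     & (l <= sigma - 1)%N ->
       mindist (code S1 S2 L1) = (sigma + 1)%N /\
       (mindist (code S1 S2 L1) < M1 (code S1 S2 L1) (code S1 S2 L2))%N]).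
Proof.
have oddA : odd (sigma + 1 - l) = false.
  have := oddD (sigma + 1 - l) l; rewrite subnK // addn1 oddS -hpar.
  by case: (odd (sigma.+1 - l)); case: (odd l).
have oddB : odd (sigma + l - 1) = false.
  have -> : (sigma + l - 1 = (sigma + 1 - l) + (l - 1).*2)%N by lia.
  by rewrite oddD odd_double oddA.
pose i := ((sigma + 1 - l)./2)%N; pose j := ((sigma + l - 1)./2)%N.
have hi : (i.*2 = sigma + 1 - l)%N by have := odd_double_half (sigma + 1 - l); rewrite oddA add0n.
have hj : (j.*2 = sigma + l - 1)%N by have := odd_double_half (sigma + l - 1); rewrite oddB add0n.
have hij : (i <= j)%N by lia.
have hjs : (j < s)%N by lia.
have hsum : (i + j = sigma)%N by lia.
have hl' : ((j - i).+1 = l)%N by lia.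
have h3 : ((sigma + 3 - l)./2 = i.+1)%N.
  have -> : (sigma + 3 - l = (i.+1).*2)%N by lia.
  by rewrite doubleK.
have h4 : ((sigma + l + 1)./2 = j.+1)%N.
  have -> : (sigma + l + 1 = (j.+1).*2)%N by lia.
  by rewrite doubleK.
rewrite h3 h4 -/i -/j; cbv zeta.
clear h3 h4 oddA oddB hpar; clearbody i j.
have hij' : (s.-1 - j <= s.-1 - i)%N by lia.
have hjs' : (s.-1 - i < s)%N by lia.
have e1 : ((s.-1 - i - (s.-1 - j)).+1 = l)%N by lia.
have e2 : (s - (s.-1 - j) = j.+1)%N by lia.
have e3 : (s - (s.-1 - i) = i.+1)%N by lia.
have e4 : ((s.-1 - j).+1 = s - j)%N by lia.
have e5 : ((s.-1 - i).+1 = s - i)%N by lia.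
have e6 : (s.-1 - j + (s.-1 - i) + sigma = 2 * s - 2)%N by lia.
have e7 : (s.-1 - sigma <= s.-1 - i)%N by lia.
have e8 : (l <= sigma - 1)%N -> (1 <= i)%N by lia.
clear hi hj.
split.
- rewrite (@code_Vg _ S1 S2 s (fun a b => deg_le a b i j)) (@code_Vg _ S1 S2 s (fun a b => deg_lt a b j i)).
  have C1 := core_M1 hS1 hS2 hij hjs.
  have C2 := core_dual hS1 hS2 hij hjs.
  have C3 := core_card hS1 hS2 hij hjs.
  rewrite /P1 /P2 in C1 C2.
  split.
  + exact: proper_L.
  + by rewrite C3 hl'.
  + exact: C1.
  + exact: C2.
  + move=> hls; rewrite md_part1 //; last by rewrite hsum.
    rewrite hsum; split => //; rewrite C1 -hsum; apply: arA1 => //; [exact: e8 | lia].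
- exists [set N : monom s | deg_le N.1 N.2 (s.-1 - j) (s.-1 - i)],
         [set N : monom s | deg_lt N.1 N.2 (s.-1 - i) (s.-1 - j)].
  rewrite (@code_Vg _ S1 S2 s (fun a b => deg_le a b (s.-1 - j) (s.-1 - i))) (@code_Vg _ S1 S2 s (fun a b => deg_lt a b (s.-1 - i) (s.-1 - j))).
  have C1 := core_M1 hS1 hS2 hij' hjs'.
  have C2 := core_dual hS1 hS2 hij' hjs'.
  have C3 := core_card hS1 hS2 hij' hjs'.
  rewrite /P1 /P2 in C1 C2.
  split.
  + exact: proper_L.
  + by rewrite C3 e1.
  + by rewrite C1 e2 e3 mulnC.
  + by apply: leq_trans C2; rewrite e4 e5 mulnC.
  + move=> hls; rewrite (md_part2 hS1 hS2 hij' hjs' e6 e7 hsigma) addn1; split => //.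
    by rewrite C1 e2 e3 mulnC -hsum; apply: arA3 => //; apply: e8.
Qed.
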